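(* Let $M$ be a positive integer with $\omega(M)\geq 2828$. Then $W(M)<M^{1/13}$.
   Context: $\omega(M)$ is the number of distinct prime divisors of $M$ and $W(M)=2^{\omega(M)}$ is the number of square-free divisors of $M$. *)

(* Defs.v *)
From mathcomp Require Import all_boot.
Definition omega (M : nat) : nat := size (primes M).
(* W M = 2 ^ omega M, the number of square-free divisors of M. *)
Definition W (M : nat) : nat := 2 ^ omega M.

(* Main.v *)
Require Import Defs.
From mathcomp Require Import all_boot.
From Stdlib Require Import Reals.
From Stdlib Require Import NArith Lia Lra.

Definition dsN : seq N := [:: 2;3;5;7;11;13;17;19;23;29;31;37;41;43;47;53;59;61;67;71;73;79;83;89;97;101;103;107;109;113;127;131;137;139;149;151;157]%num.
Lemma dsN_ge2 : all (fun d => N.leb 2 d) dsN. Proof. by vm_compute. Qed.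
Definition compN (n : N) : bool :=
  N.ltb n 2 || has (fun d => N.ltb d n && N.eqb (N.modulo n d) 0) dsN.
Fixpoint rangeN (n : nat) (s : N) : seq N :=
  if n is n'.+1 then s :: rangeN n' (N.succ s) else [::].
Definition LN : seq N := filter (fun n => ~~ compN n) (rangeN 25674 0).

Lemma mem_rangeN n s m : N.to_nat s <= m < N.to_nat s + n -> N.of_nat m \in rangeN n s.
Proof.
elim: n s => [|n IH] s /=; first by rewrite addn0 => /andP [a b]; move: (leq_ltn_trans a b); rewrite ltnn.
move=> /andP [a b]; rewrite in_cons.
case: (ltngtP (N.to_nat s) m) a => // [lt|eq] _.
  rewrite IH ?orbT //; apply/andP; split.
    by rewrite N2Nat.inj_succ.
  by rewrite N2Nat.inj_succ addSnnS.
by apply/orP; left; apply/eqP; rewrite -eq N2Nat.id.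
Qed.
Definition Lnat : seq nat := map N.to_nat LN.
Definition prodN (s : seq N) : N := foldr N.mul 1%num s.

Definition stepN (p : N * N) (x : N) : N * N :=
  let m := (p.1 * x)%num in
  if N.leb (N.shiftl 1 120) m then (N.shiftr m 60, (p.2 + 60)%num) else (m, p.2).

Lemma fst_pair (a b : N) : (a, b).1 = a. Proof. by []. Qed.
Lemma snd_pair (a b : N) : (a, b).2 = b. Proof. by []. Qed.

Lemma stepN_ok p x :
  ((stepN p x).1 * 2 ^ (stepN p x).2 <= p.1 * 2 ^ p.2 * x)%num.
Proof.
have E : (p.1 * 2 ^ p.2 * x = (p.1 * x) * 2 ^ p.2)%num by ring.
rewrite E /stepN.
case: (N.leb _ _).
- rewrite fst_pair snd_pair.
  rewrite N.shiftr_div_pow2 N.pow_add_r.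
  have H := N.Div0.mul_div_le (p.1 * x) (2 ^ 60).
  move: H; set q := (p.1 * x)%num; set a := (2 ^ p.2)%num; set b := (2 ^ 60)%num => H.
  rewrite (N.mul_comm a b) N.mul_assoc (N.mul_comm (q / b) b).
  exact: N.mul_le_mono_r.
- rewrite fst_pair snd_pair; exact: N.le_refl.
Qed.

Lemma foldN_ok s p :
  ((foldl stepN p s).1 * 2 ^ (foldl stepN p s).2 <= p.1 * 2 ^ p.2 * prodN s)%num.
Proof.
elim: s p => [|x s IH] p /=.
  rewrite N.mul_1_r; exact: N.le_refl.
apply: N.le_trans (IH _) _.
rewrite N.mul_assoc.
by apply: N.mul_le_mono_r; apply: stepN_ok.
Qed.

Lemma prodN_check :
  N.ltb (N.shiftl 1 36764)
    (N.shiftl (foldl stepN (1%num, 0%num) LN).1 (foldl stepN (1%num, 0%num) LN).2) = true.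
Proof. vm_cast_no_check (erefl true). Qed.

Lemma foldN_ok1 s : ((foldl stepN (1%num, 0%num) s).1 * 2 ^ (foldl stepN (1%num, 0%num) s).2 <= prodN s)%num.
Proof.
apply: N.le_trans; first exact: (foldN_ok s (1%num, 0%num)).
rewrite fst_pair snd_pair N.pow_0_r !N.mul_1_l; exact: N.le_refl.
Qed.

Lemma abstr_gt (r : N * N) (P K : N) :
  N.ltb (N.shiftl 1 K) (N.shiftl r.1 r.2) = true -> (r.1 * 2 ^ r.2 <= P)%num ->
  (N.shiftl 1 K < P)%num.
Proof.
move/N.ltb_lt => h1 h2; rewrite !N.shiftl_mul_pow2 in h1 *.
exact: N.lt_le_trans h1 h2.
Qed.

Lemma prodN_gt : (N.shiftl 1 36764 < prodN LN)%num.
Proof. exact (@abstr_gt (foldl stepN (1%num, 0%num) LN) (prodN LN) 36764 prodN_check (foldN_ok1 LN)). Qed.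

Lemma natpowE m n : Nat.pow m n = expn m n.
Proof. elim: n => [|n IH] //=. by rewrite expnS IH. Qed.

Lemma prodN_nat s : N.to_nat (prodN s) = \prod_(x <- map N.to_nat s) x.
Proof.
elim: s => [|x s IH]; first by rewrite big_nil.
by rewrite /= big_cons N2Nat.inj_mul IH.
Qed.

Lemma pow_transfer (P : N) : (N.shiftl 1 36764 < P)%num -> expn 2 (13 * 2828) < N.to_nat P.
Proof.
move=> H.
have H2 : (N.to_nat (N.shiftl 1 36764) < N.to_nat P)%coq_nat by lia.
move/ltP: H2. rewrite N.shiftl_1_l N2Nat.inj_pow natpowE.
have -> : N.to_nat 2 = 2 by [].
have -> : (36764 = 13 * 2828)%num by [].
rewrite N2Nat.inj_mul.
have -> : N.to_nat 13 = 13 by [].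
have -> : N.to_nat 2828 = 2828 by vm_compute.
by [].
Qed.

Lemma prodL : expn 2 (13 * 2828) < \prod_(x <- Lnat) x.
Proof. rewrite /Lnat -prodN_nat. exact: pow_transfer prodN_gt. Qed.

Lemma LfactsB : (size Lnat == 2828) && (nth 0 Lnat 2827 == 25673).
Proof. vm_cast_no_check (erefl true). Qed.

Lemma sizeL : size Lnat = 2828.
Proof. by case/andP: LfactsB => /eqP. Qed.

Lemma lastL : nth 0 Lnat 2827 = 25673.
Proof. by case/andP: LfactsB => _ /eqP. Qed.

Lemma sortedL : sorted ltn Lnat.
Proof. vm_cast_no_check (erefl true). Qed.

Lemma prime_not_comp (n : N) : prime (N.to_nat n) -> compN n = false.
Proof.
move=> pr; apply/negbTE; rewrite /compN negb_or; apply/andP; split.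
  apply/negP => /N.ltb_lt H.
  have : N.to_nat n < 2 by apply/ltP; lia.
  by case: (N.to_nat n) pr => [|[|]].
apply/hasPn => d dd.
have d2 : (2 <= d)%num by apply/N.leb_le; exact: (allP dsN_ge2).
set j := N.to_nat d.
have j2 : 2 <= j by apply/leP; rewrite /j; lia.
have <- : N.of_nat j = d by rewrite /j N2Nat.id.
apply/negP => /andP [/N.ltb_lt lt /N.eqb_eq md].
have jn : (N.of_nat j <> 0)%num by move/leP: j2; lia.
have E := N.div_mod n (N.of_nat j) jn.
rewrite md N.add_0_r in E.
have E2 : N.to_nat n = j * N.to_nat (n / N.of_nat j).
  by rewrite {1}E N2Nat.inj_mul Nat2N.id.
have dv : j %| N.to_nat n by rewrite E2 dvdn_mulr.
case/primeP: pr => _ /(_ j dv) /orP [/eqP j1|/eqP jn'].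
  by rewrite j1 in j2.
by move: lt; rewrite jn' N2Nat.id => /N.lt_irrefl.
Qed.

Lemma primes_in_L m : m < 25674 -> prime m -> m \in Lnat.
Proof.
move=> lm pm.
rewrite -(Nat2N.id m) /Lnat; apply: map_f.
rewrite /LN mem_filter prime_not_comp ?Nat2N.id //.
apply: mem_rangeN. by rewrite lm.
Qed.

Lemma prod_le_nth (a b : seq nat) : size a = size b ->
  (forall i, i < size a -> nth 0 a i <= nth 0 b i) ->
  \prod_(x <- a) x <= \prod_(x <- b) x.
Proof.
elim: a b => [|x a IH] [|y b] //=.
move=> [sz] H.
rewrite !big_cons; apply: leq_mul; first exact: (H 0).
by apply: IH => // i lti; apply: (H i.+1).
Qed.

Lemma prod_ge_const (c : nat) (d : seq nat) : (forall x, x \in d -> c <= x) ->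
  expn c (size d) <= \prod_(x <- d) x.
Proof.
elim: d => [|x d IH] H; first by rewrite big_nil.
rewrite big_cons /= expnS; apply: leq_mul.
  by apply: H; rewrite mem_head.
by apply: IH => y yd; apply: H; rewrite in_cons yd orbT.
Qed.

Lemma key (Lnat : seq nat) (sizeL : size Lnat = 2828) (lastL : nth 0 Lnat 2827 = 25673)
  (sortedL : sorted ltn Lnat) (primes_in_L : forall m, m < 25674 -> prime m -> m \in Lnat)
  (s : seq nat) i : sorted ltn s -> all prime s -> i < size s -> i < 2828 ->
  nth 0 Lnat i <= nth 0 s i.
Proof.
move=> so pr lis li; rewrite leqNgt; apply/negP => lt.
have sol : sorted leq s by apply: sub_sorted so => x y /ltnW.
have soL : sorted leq Lnat by apply: sub_sorted sortedL => x y /ltnW.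
have sub : {subset take i.+1 s <= take i Lnat}.
  move=> x /(nthP 0) [j]; rewrite size_takel // => ltj.
  rewrite nth_take // => <-.
  have xs : nth 0 s j <= nth 0 s i.
    exact: (sorted_leq_nth leq_trans leqnn 0 sol j i (leq_trans ltj lis) lis ltj).
  have xlt : nth 0 s j < nth 0 Lnat i by apply: leq_ltn_trans lt.
  have Lle : nth 0 Lnat i <= 25673.
    rewrite -lastL; apply: (sorted_leq_nth leq_trans leqnn 0 soL i 2827).
    - by rewrite inE sizeL.
    - by rewrite inE sizeL.
    - by rewrite -ltnS.
  have xin : nth 0 s j \in Lnat.
    apply: primes_in_L; first exact: leq_trans xlt (leq_trans Lle (leqnSn _)).
    by apply: (allP pr); apply: mem_nth; apply: leq_trans ltj _.
  move: xlt xin; set y := nth 0 s j => xlt xin.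
  have jx := nth_index 0 xin.
  have ix : index y Lnat < size Lnat by rewrite index_mem.
  have ixi : index y Lnat < i.
    rewrite ltnNge; apply/negP => ile.
    have h := sorted_leq_nth leq_trans leqnn 0 soL i (index y Lnat).
    have h' : nth 0 Lnat i <= nth 0 Lnat (index y Lnat).
      apply: h => //; rewrite inE sizeL; exact: leq_trans li _.
    rewrite jx in h'.
    by move: (leq_ltn_trans h' xlt); rewrite ltnn.
  rewrite -jx -(nth_take 0 ixi); apply: mem_nth.
  by rewrite size_takel // sizeL ltnW.
have := uniq_leq_size _ sub.
rewrite take_uniq; last by apply: sorted_uniq so; [exact: ltn_trans|exact: ltnn].
rewrite size_takel // size_takel ?sizeL ?(ltnW li) // => /(_ isT).
by rewrite ltnn.
Qed.

Lemma main_nat (Lnat : seq nat) (sizeL : size Lnat = 2828) (lastL : nth 0 Lnat 2827 = 25673)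
  (sortedL : sorted ltn Lnat) (primes_in_L : forall m, m < 25674 -> prime m -> m \in Lnat)
  (prodL : expn 2 (13 * 2828) < \prod_(x <- Lnat) x)
  (M : nat) (hM : 0 < M) (hw : 2828 <= size (primes M)) :
  expn 2 (13 * size (primes M)) < M.
Proof.
set s := primes M in hw *.
have pr : all prime s by apply/allP => p; rewrite mem_primes => /andP[].
have so : sorted ltn s := sorted_primes M.
have Mge : \prod_(p <- s) p <= M.
  rewrite [X in _ <= X](prod_prime_decomp hM) prime_decompE big_map /=.
  rewrite big_seq [X in _ <= X]big_seq; apply: leq_prod => p ps.
  have p0 : 0 < p by apply: prime_gt0; move: ps; rewrite mem_primes => /andP[].
  by rewrite -{1}(expn1 p) leq_pexp2l // logn_gt0.
have Hkey i : i < 2828 -> nth 0 Lnat i <= nth 0 s i.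
  by move=> li; exact: (@key Lnat sizeL lastL sortedL primes_in_L s i so pr (leq_trans li hw) li).
have Htake : \prod_(x <- Lnat) x <= \prod_(x <- take 2828 s) x.
  apply: prod_le_nth; first by rewrite sizeL size_takel.
  by move=> i; rewrite sizeL => li; rewrite nth_take //; apply: Hkey.
have Hdrop : expn (expn 2 13) (size (drop 2828 s)) <= \prod_(x <- drop 2828 s) x.
  apply: prod_ge_const => x /(nthP 0) [j]; rewrite size_drop => lj <-.
  rewrite nth_drop.
  have h1 : nth 0 s 2827 < nth 0 s (2828 + j).
    apply: (sorted_ltn_nth ltn_trans 0 so 2827 (2828 + j)).
    - by rewrite inE; apply: leq_trans hw.
    - by rewrite inE -ltn_subRL.
    - by rewrite ltnS leq_addr.
  have h2 := Hkey 2827 isT; rewrite lastL in h2.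
  apply: ltnW; apply: leq_ltn_trans h1.
  by apply: leq_trans h2.
have sz : size s = 2828 + size (drop 2828 s) by rewrite size_drop subnKC.
rewrite sz mulnDr expnD [expn 2 (13 * size _)]expnM.
rewrite -(cat_take_drop 2828 s) big_cat /= in Mge.
apply: leq_trans Mge.
apply: (@leq_trans (\prod_(x <- take 2828 s) x * expn (expn 2 13) (size (drop 2828 s)))).
  rewrite ltn_pmul2r; first exact: leq_trans prodL Htake.
  by rewrite expn_gt0 expn_gt0.
by rewrite leq_mul2l Hdrop orbT.
Qed.

Theorem lemma5p6 (M : nat) (hM : 0 < M) (hw : 2828 <= omega M) :
  (INR (W M) < Rpower (INR M) (1 / 13))%R.
Proof.
have Hn : expn 2 (13 * omega M) < M.
  exact: (@main_nat Lnat sizeL lastL sortedL primes_in_L prodL M hM hw).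
rewrite /W.
set A := INR (expn 2 (omega M)).
have A0 : (0 < A)%R by apply: lt_0_INR; apply/ltP; rewrite expn_gt0.
have HA : (A ^ 13 < INR M)%R.
  rewrite /A -pow_INR natpowE -expnM mulnC.
  by apply: lt_INR; apply/ltP.
have e : (INR 13 * (1 / 13) = 1)%R by rewrite INR_IZR_INZ /=; field.
have -> : A = Rpower (A ^ 13) (1 / 13).
  by rewrite -Rpower_pow // Rpower_mult e Rpower_1.
apply: Rlt_Rpower_l; first lra.
split => //; exact: pow_lt.
Qed.
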